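(* Let $A \in \mathbb{R}^{m \times n}$ and $b \in \mathbb{R}^m$, and suppose that $\mathcal{P} = \{x \in \mathbb{R}^n : Ax \geq b\}$ is a polytope (i.e., bounded) and that we are in the nondegenerate setting (distinct feasible bases have distinct basic points). Let $G = (V,E)$ be a finite undirected graph whose vertices are subsets of $[m]$. Suppose that all of the following hold: (i) $G$ is nonempty; (ii) every $I \in V$ is a feasible basis; (iii) for every $I \in V$ and every $J \in N_G(I)$, $\#(I \cap J) = n-1$; (iv) for every $I \in V$, $\# N_G(I) = n$. Then $G = G_\mathrm{bases}$.
   Context: $[m] = \{1,\dots,m\}$. For $I \subset [m]$, $A_I$ and $b_I$ denote the submatrix of $A$ (resp. subvector of $b$) formed by the rows indexed by $I$. A basis is a subset $I \subset [m]$ with $\#I = n$ such that $A_I$ is nonsingular; its basic point is the unique solution $x^I$ of $A_I x = b_I$. The basis is feasible if $x^I \in \mathcal{P}$. Two feasible bases $I, I'$ are adjacent if $\#(I \cap I') = n-1$. $G_\mathrm{bases}$ is the graph whose vertices are the feasible bases of $\mathcal{P}$ and whose edges join adjacent feasible bases. $N_G(I)$ is the set of neighbors of $I$ in $G$. The nondegenerate setting means that the map $I \mapsto x^I$ from feasible bases to points is injective. *)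

(* Defs.v *)
From mathcomp Require Import all_boot all_order all_algebra.
Set Implicit Arguments. Unset Strict Implicit. Unset Printing Implicit Defensive.
Import Order.TTheory GRing.Theory Num.Theory.
Local Open Scope ring_scope.

Section Polyhedra.
Variables (R : realFieldType) (m n : nat) (A : 'M[R]_(m, n)) (b : 'cV[R]_m).

Definition in_poly (x : 'cV[R]_n) : Prop := forall i : 'I_m, b i 0 <= (A *m x) i 0.

Definition poly_bounded : Prop :=
  exists M : R, forall x : 'cV[R]_n, in_poly x -> forall j : 'I_n, `|x j 0| <= M.

Definition subrows (I : {set 'I_m}) : 'M[R]_(#|I|, n) :=
  rowsub (fun k : 'I_#|I| => enum_val k) A.

Definition is_basis (I : {set 'I_m}) : bool :=
  (#|I| == n) && (\rank (subrows I) == n).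

Definition solves (I : {set 'I_m}) (x : 'cV[R]_n) : Prop :=
  forall i : 'I_m, i \in I -> (A *m x) i 0 = b i 0.

Definition feasible_basis (I : {set 'I_m}) : Prop :=
  is_basis I /\ exists x : 'cV[R]_n, solves I x /\ in_poly x.

Definition nondegenerate_setting : Prop :=
  forall I J : {set 'I_m}, feasible_basis I -> feasible_basis J ->
  forall x : 'cV[R]_n, solves I x -> solves J x -> I = J.

(* adjacency of bases: #(I cap J) = n - 1 (integer arithmetic, written as + 1) *)
Definition adjacent (I J : {set 'I_m}) : bool := (#|I :&: J| + 1 == n)%N.

End Polyhedra.

Definition simple_graph_on (m : nat) (V : {set {set 'I_m}}) (E : rel {set 'I_m}) : Prop :=
  (forall I J, E I J = E J I) /\ (forall I, ~~ E I I) /\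
  (forall I J, E I J -> (I \in V) && (J \in V)).

Definition nbhd (m : nat) (V : {set {set 'I_m}}) (E : rel {set 'I_m}) (I : {set 'I_m})
  : {set {set 'I_m}} := [set J in V | E I J].

(* Main.v *)
Require Import Defs.
From mathcomp Require Import all_boot all_order all_algebra.
From Stdlib Require Import ClassicalEpsilon.
Import Order.TTheory GRing.Theory Num.Theory.
Local Open Scope ring_scope.

Lemma seq_min (T : eqType) (R : realFieldType) (F : T -> R) (x0 : T) (s : seq T) :
  exists2 x, x \in x0 :: s & forall y, y \in x0 :: s -> F x <= F y.
Proof.
elim: s x0 => [|a s IH] x0.
  by exists x0 => [|y]; rewrite ?inE // => /eqP ->.
have [x Hx Hmin] := IH a.
have [le|lt] := leP (F x0) (F x).
  exists x0; first by rewrite inE eqxx.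
  move=> y; rewrite inE => /orP [/eqP ->//|Hy]; exact: le_trans le (Hmin y Hy).
exists x; first by rewrite inE Hx orbT.
move=> y; rewrite inE => /orP [/eqP ->|Hy]; [exact: ltW | exact: Hmin].
Qed.

Lemma set_min (T : finType) (R : realFieldType) (F : T -> R) (S : {set T}) :
  S != set0 -> exists2 x, x \in S & forall y, y \in S -> F x <= F y.
Proof.
case/set0Pn => x0 Hx0.
have [x Hx Hm] := @seq_min _ _ F x0 (enum S).
exists x.
  by move: Hx; rewrite inE => /orP [/eqP ->//|]; rewrite mem_enum.
by move=> y Hy; apply: Hm; rewrite inE mem_enum Hy orbT.
Qed.

Lemma basis_comb (R : realFieldType) (m n : nat) (A : 'M[R]_(m, n)) (I : {set 'I_m}) :
  is_basis A I -> forall c : 'rV[R]_n, exists lam : 'I_#|I| -> R,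
  forall x : 'cV[R]_n, (c *m x) 0 0 = \sum_k lam k * (A *m x) (enum_val k) 0.
Proof.
case/andP => _ hr c.
have hf : row_full (subrows A I) by [].
have /submxP [D ->] := submx_full c hf.
exists (fun k => D 0 k) => x.
rewrite -mulmxA mxE; apply: eq_bigr => k _.
by rewrite /subrows mul_rowsub_mx mxE.
Qed.

Lemma basis_inj (R : realFieldType) (m n : nat) (A : 'M[R]_(m, n)) (I : {set 'I_m}) (y : 'cV[R]_n) :
  is_basis A I -> (forall k, k \in I -> (A *m y) k 0 = 0) -> y = 0.
Proof.
move=> hB hk; apply/matrixP => j z; rewrite (ord1 z) mxE.
have [lam H] := @basis_comb _ _ _ _ _ hB (delta_mx 0 j).
move: (H y); rewrite -rowE mxE => ->.
by apply: big1 => k _; rewrite hk ?mulr0 // enum_valP.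
Qed.

From mathcomp Require Import zify lra.

Lemma entB (R : realFieldType) (m n : nat) (A : 'M[R]_(m, n)) (x y : 'cV[R]_n) k :
  (A *m (x - y)) k 0 = (A *m x) k 0 - (A *m y) k 0.
Proof. rewrite mulmxBr; set P := A *m x; set Q := A *m y; by rewrite !mxE. Qed.

Lemma entZ (R : realFieldType) (m n : nat) (A : 'M[R]_(m, n)) (a : R) (x : 'cV[R]_n) k :
  (A *m (a *: x)) k 0 = a * (A *m x) k 0.
Proof. rewrite -scalemxAr; set P := A *m x; by rewrite !mxE. Qed.

Lemma step_lem (R : realFieldType) (m n : nat) (A : 'M[R]_(m, n)) (b : 'cV[R]_m)
  (I J : {set 'I_m}) (xI xJ : 'cV[R]_n) (i : 'I_m) :
  nondegenerate_setting A b -> feasible_basis A b I -> feasible_basis A b J ->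
  solves A b I xI -> in_poly A b xI -> solves A b J xJ -> in_poly A b xJ ->
  i \in I -> i \notin J -> (forall k, k \in I -> k != i -> k \in J) ->
  (forall k, k \in I -> k != i -> (A *m (xJ - xI)) k 0 = 0) /\
  0 < (A *m (xJ - xI)) i 0.
Proof.
move=> Hnd fI fJ sI pI sJ pJ iI iJ sub.
have ker : forall k, k \in I -> k != i -> (A *m (xJ - xI)) k 0 = 0.
  move=> k kI ki; rewrite entB sJ ?sI ?subrr //; exact: sub.
split => //.
rewrite lt_def; apply/andP; split; last first.
  by rewrite entB sI // subr_ge0; apply: pJ.
apply/negP => /eqP a0.
have y0 : xJ - xI = 0.
  apply: (@basis_inj _ _ _ A I); first by case: fI.
  by move=> k kI; case: (eqVneq k i) => [->|ki]; [exact: a0 | exact: ker].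
have eJI : xJ = xI by apply/eqP; rewrite -subr_eq0 y0.
have := Hnd I J fI fJ xI sI; rewrite -eJI => /(_ sJ) eIJ.
by move: iJ; rewrite -eIJ iI.
Qed.
Arguments step_lem {R m n A b I J xI xJ i}.

Lemma no_lt (R : realFieldType) (m n : nat) (A : 'M[R]_(m, n)) (b : 'cV[R]_m)
  (J1 : {set 'I_m}) (xI x1 x2 : 'cV[R]_n) (i : 'I_m) (t1 t2 : R) :
  is_basis A J1 -> in_poly A b xI -> solves A b J1 x1 -> in_poly A b x2 ->
  0 < t1 -> t1 < t2 ->
  (forall k, t2 * (A *m (x1 - xI)) k 0 = t1 * (A *m (x2 - xI)) k 0) ->
  0 < (A *m (x2 - xI)) i 0 -> False.
Proof.
move=> hB pI s1 p2 t1p t12 rel pos.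
have y0 : x2 - xI = 0.
  apply: (@basis_inj _ _ _ A J1 (x2 - xI) hB) => k kJ.
  have := rel k; rewrite !entB s1 //.
  have := pI k; have := p2 k.
  move: ((A *m xI) k 0) ((A *m x2) k 0) (b k 0) => u v w h1 h2 h3.
  nra.
by move: pos; rewrite y0 mulmx0 mxE ltxx.
Qed.
Arguments no_lt {R m n A b J1 xI x1 x2 i t1 t2}.

Lemma uniq_nb (R : realFieldType) (m n : nat) (A : 'M[R]_(m, n)) (b : 'cV[R]_m)
  (I J1 J2 : {set 'I_m}) (i : 'I_m) :
  nondegenerate_setting A b -> feasible_basis A b I ->
  feasible_basis A b J1 -> feasible_basis A b J2 ->
  i \in I -> i \notin J1 -> i \notin J2 ->
  (forall k, k \in I -> k != i -> k \in J1) ->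
  (forall k, k \in I -> k != i -> k \in J2) -> J1 = J2.
Proof.
move=> Hnd fI f1 f2 iI i1 i2 s1 s2.
have fI' := fI; have f1' := f1; have f2' := f2.
case: fI' => bI [xI [sI pI]]; case: f1' => b1 [x1 [sx1 px1]];
case: f2' => b2 [x2 [sx2 px2]].
have [k1 t1p] := step_lem Hnd fI f1 sI pI sx1 px1 iI i1 s1.
have [k2 t2p] := step_lem Hnd fI f2 sI pI sx2 px2 iI i2 s2.
set t1 := (A *m (x1 - xI)) i 0 in t1p k1.
set t2 := (A *m (x2 - xI)) i 0 in t2p k2.
have z0 : t2 *: (x1 - xI) - t1 *: (x2 - xI) = 0.
  apply: (@basis_inj _ _ _ A I _ bI) => k kI.
  rewrite entB !entZ.
  case: (eqVneq k i) => [->|ki]; first by rewrite -/t1 -/t2 mulrC subrr.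
  by rewrite k1 // k2 // !mulr0 subrr.
have rel : forall k, t2 * (A *m (x1 - xI)) k 0 = t1 * (A *m (x2 - xI)) k 0.
  move=> k; apply/eqP; rewrite -subr_eq0.
  have := congr1 (fun M => (A *m M) k 0) z0; rewrite /= entB !entZ => ->.
  by rewrite mulmx0 mxE.
have rel' : forall k, t1 * (A *m (x2 - xI)) k 0 = t2 * (A *m (x1 - xI)) k 0.
  by move=> k; rewrite rel.
have [lt12|lt21|e12] := ltgtP t1 t2.
- by case: (no_lt b1 pI sx1 px2 t1p lt12 rel t2p).
- by case: (no_lt b2 pI sx2 px1 t2p lt21 rel' t1p).
apply: (Hnd J1 J2 f1 f2 x2) => // k kJ1.
have := rel k; rewrite e12 => /mulfI; rewrite (gt_eqF t2p) => /(_ isT).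
rewrite !entB => /addIr <-; exact: sx1.
Qed.
Arguments uniq_nb {R m n A b I J1 J2 i}.

Lemma fE (R : realFieldType) (m n : nat) (A : 'M[R]_(m, n)) (K : {set 'I_m}) (x : 'cV[R]_n) :
  ((\row_j \sum_(k in K) A k j) *m x) 0 0 = \sum_(k in K) (A *m x) k 0.
Proof.
rewrite mxE.
under eq_bigr do rewrite mxE mulr_suml.
rewrite exchange_big /=; apply: eq_bigr => k _; by rewrite mxE.
Qed.

Theorem theorem3p5 (R : realFieldType) (m n : nat) (A : 'M[R]_(m, n)) (b : 'cV[R]_m)
  (V : {set {set 'I_m}}) (E : rel {set 'I_m}) :
  poly_bounded A b ->
  nondegenerate_setting A b ->
  simple_graph_on V E ->
  V != set0 ->
  (forall I, I \in V -> feasible_basis A b I) ->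
  (forall I J, I \in V -> J \in nbhd V E I -> (#|I :&: J| + 1 = n)%N) ->
  (forall I, I \in V -> #|nbhd V E I| = n) ->
  (forall I, I \in V <-> feasible_basis A b I) /\
  (forall I J, E I J <-> feasible_basis A b I /\ feasible_basis A b J /\ adjacent n I J).
Proof.
move=> _ Hnd [Hsym [Hirr HEV]] HV0 HVf Hadj Hcard.
have cardI : forall I, feasible_basis A b I -> #|I| = n.
  by move=> I [/andP [/eqP e _] _].
have single : forall I J, feasible_basis A b I -> (#|I :&: J| + 1 = n)%N ->
    exists i, I :\: J = [set i].
  move=> I J fI h; apply/cards1P; rewrite cardsD (cardI I fI); apply/eqP; lia.
have singP : forall (I J : {set 'I_m}) (i : 'I_m), I :\: J = [set i] ->
    [/\ i \in I, i \notin J & forall k, k \in I -> k != i -> k \in J].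
  move=> I J i e.
  have : i \in I :\: J by rewrite e set11.
  rewrite inE => /andP [iJ iI]; split => // k kI ki.
  apply/negPn/negP => kJ.
  have : k \in I :\: J by rewrite inE kJ kI.
  by rewrite e inE (negbTE ki).
have nbex : forall I i, I \in V -> i \in I -> exists J, [/\ J \in V, E I J, i \notin J &
    forall k, k \in I -> k != i -> k \in J].
  move=> I i IV iI.
  have fI := HVf I IV.
  have inN : forall J, J \in nbhd V E I -> exists k, I :\: J = [set k].
    move=> J JN; apply: single => //; exact: Hadj.
  case: (boolP [exists J in nbhd V E I, i \notin J]).
    case/existsP => J /andP [JN iJ].
    have [k ek] := inN J JN.
    have [kI kJ ksub] := singP _ _ _ ek.
    move: JN; rewrite inE => /andP [JV EIJ].
    exists J; split => // k' k'I k'i.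
    apply/negPn/negP => k'J.
    have : k' \in I :\: J by rewrite inE k'J k'I.
    have : i \in I :\: J by rewrite inE iJ iI.
    by rewrite ek !inE => /eqP ik /eqP k'k; move: k'i; rewrite ik k'k eqxx.
  rewrite negb_exists => /forallP allN.
  have inj : {in nbhd V E I &, injective (fun J => I :\: J)}.
    move=> J1 J2 J1N J2N /= e.
    have [k ek] := inN J1 J1N.
    have [kI k1 s1] := singP _ _ _ ek.
    rewrite e in ek.
    have [_ k2 s2] := singP _ _ _ ek.
    move: J1N J2N; rewrite !inE => /andP [J1V _] /andP [J2V _].
    exact: (uniq_nb Hnd fI (HVf _ J1V) (HVf _ J2V) kI k1 k2 s1 s2).
  have sub : [set I :\: J | J in nbhd V E I] \subset [set [set k] | k in I :\ i].
    apply/subsetP => S /imsetP [J JN ->].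
    have [k ek] := inN J JN.
    have [kI kJ _] := singP _ _ _ ek.
    rewrite ek; apply/imsetP; exists k => //.
    rewrite !inE kI andbT; apply/negP => /eqP ki.
    by move: (allN J); rewrite JN /= -ki kJ.
  have := subset_leq_card sub.
  rewrite (card_in_imset inj) Hcard // => h.
  have := leq_trans h (leq_imset_card _ _).
  have := cardsD1 i I; rewrite iI (cardI I fI); lia.
have part1 : forall K, K \in V <-> feasible_basis A b K.
  move=> K; split; first exact: HVf.
  move=> fK.
  apply/negPn/negP => KV.
  pose pt I := epsilon (inhabits (0 : 'cV[R]_n)) (fun x => solves A b I x /\ in_poly A b x).
  have ptP : forall I, feasible_basis A b I -> solves A b I (pt I) /\ in_poly A b (pt I).
    move=> I [_ ex]; exact: (epsilon_spec (inhabits 0) _ ex).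
  pose c := \row_j \sum_(k in K) A k j : 'rV[R]_n.
  pose f (x : 'cV[R]_n) := (c *m x) 0 0.
  have [I IV Imin] := @set_min _ _ (fun I => f (pt I)) V HV0.
  have fI := HVf I IV.
  have [sI pI] := ptP I fI.
  have [sK pK] := ptP K fK.
  have [lam Hlam] := @basis_comb _ _ _ A I (proj1 fI) c.
  case: (boolP [exists k, lam k < 0]).
    case/existsP => k lk.
    set i := enum_val k.
    have iI : i \in I := enum_valP k.
    have [J [JV EIJ iJ sJ]] := nbex I i IV iI.
    have fJ := HVf J JV.
    have [sJp pJ] := ptP J fJ.
    have [ker pos] := step_lem Hnd fI fJ sI pI sJp pJ iI iJ sJ.
    have : f (pt J) - f (pt I) < 0.
      rewrite /f -entB Hlam (bigD1 k) //= big1 ?addr0; first by nra.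
      move=> k' k'k; rewrite ker ?mulr0 ?enum_valP //.
      by apply/eqP => /enum_val_inj e; move: k'k; rewrite e eqxx.
    have := Imin J JV; rewrite /=; lra.
  rewrite negb_exists => /forallP hl.
  have h1 : f (pt I) <= f (pt K).
    rewrite /f !Hlam; apply: ler_sum => k _; apply: ler_wpM2l.
      by rewrite leNgt hl.
    by rewrite sI ?enum_valP //; exact: pK.
  have hK : f (pt K) = \sum_(k in K) b k 0.
    by rewrite /f fE; apply: eq_bigr => k kK; rewrite sK.
  have hs : \sum_(k in K) ((A *m pt I) k 0 - b k 0) = 0.
    apply/le_anti/andP; split.
      by rewrite sumrB -hK -fE subr_le0.
    by apply: sumr_ge0 => k _; rewrite subr_ge0; exact: pI.
  have sKI : solves A b K (pt I).
    move=> k kK; apply/eqP; rewrite -subr_eq0; apply/eqP.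
    apply: (psumr_eq0P _ hs) => // k' _; rewrite subr_ge0; exact: pI.
  have eIK := Hnd I K fI fK (pt I) sI sKI.
  by move: KV; rewrite -eIK IV.
split => // I J; split.
  move=> EIJ; have /andP [IV JV] := HEV I J EIJ.
  split; first exact: HVf.
  split; first exact: HVf.
  by apply/eqP; apply: Hadj => //; rewrite inE JV EIJ.
move=> [fI [fJ /eqP adj]].
have IV : I \in V by apply/part1.
have [i ei] := single I J fI adj.
have [iI iJ sJ] := singP _ _ _ ei.
have [J' [J'V EIJ' iJ' sJ']] := nbex I i IV iI.
by rewrite (uniq_nb Hnd fI fJ (HVf _ J'V) iI iJ iJ' sJ sJ').
Qed.
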